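(* In the algorithm described in the context, only four types of messages are used, namely $\textsc{write0}(v)$, $\textsc{write1}(v)$, $\textsc{read}()$ and $\textsc{proceed}()$, and no message carries control information beyond its type. Moreover, a read operation requires $O(n)$ messages and a write operation requires $O(n^2)$ messages.
   Context: Model. There are $n$ asynchronous processes $p_1,\dots,p_n$, of which up to $t<n/2$ may crash. Every ordered pair of processes is connected by a reliable, asynchronous, not necessarily FIFO channel. One process $p_w$ is the single writer; the initial register value is $v_0$. The notation $\textsc{write}(b,v)$ stands for $\textsc{write0}(v)$ if $b=0$ and for $\textsc{write1}(v)$ if $b=1$. Local variables of $p_i$. These are: an array $history_i$ with $history_i[0]=v_0$; an integer array $w\_sync_i[1..n]$, initially all $0$; and an integer array $r\_sync_i[1..n]$, initially all $0$. $\mathsf{write}(v)$, executed by $p_w$: (1) $wsn\gets w\_sync_w[w]+1$; $w\_sync_w[w]\gets wsn$; $history_w[wsn]\gets v$; $b\gets wsn\bmod 2$. (2) For each $j$ with $w\_sync_w[j]=wsn-1$, send $\textsc{write}(b,v)$ to $p_j$. (3) Wait until at least $n-t$ indices $j$ satisfy $w\_sync_w[j]=wsn$. (4) Return. $\mathsf{read}()$, executed by $p_i$: (5) $r\_sync_i[i]\gets r\_sync_i[i]+1$, and let $rsn$ denote this new value. (6) Send $\textsc{read}()$ to every $p_j$ with $j\ne i$. (7) Wait until at least $n-t$ indices $j$ satisfy $r\_sync_i[j]=rsn$. (8) $sn\gets w\_sync_i[i]$. (9) Wait until at least $n-t$ indices $j$ satisfy $w\_sync_i[j]\ge sn$. (10)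 Return $history_i[sn]$. On receipt of $\textsc{write}(b,v)$ from $p_j$, process $p_i$ executes: (i) Wait until $b=(w\_sync_i[j]+1)\bmod 2$. (ii) $wsn\gets w\_sync_i[j]+1$. (iii) If $wsn=w\_sync_i[i]+1$: set $w\_sync_i[i]\gets wsn$ and $history_i[wsn]\gets v$, then for each $\ell$ with $w\_sync_i[\ell]=wsn-1$, send $\textsc{write}(wsn\bmod 2,v)$ to $p_\ell$. (iv) Otherwise, if $wsn<w\_sync_i[i]$, send $\textsc{write}((wsn+1)\bmod 2, history_i[wsn+1])$ to $p_j$. (v) $w\_sync_i[j]\gets wsn$. On receipt of $\textsc{read}()$ from $p_j$, process $p_i$ executes: (i) $sn\gets w\_sync_i[i]$. (ii) Wait until $w\_sync_i[j]\ge sn$. (iii) Send $\textsc{proceed}()$ to $p_j$. On receipt of $\textsc{proceed}()$ from $p_j$, process $p_i$ sets $r\_sync_i[j]\gets r\_sync_i[j]+1$. *)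

(* Defs.v *)
(* Operational model of the single-writer register
   algorithm of the paper, with ghost information (message tags and a log
   of all messages ever sent) used only to attribute messages to operations. *)
From mathcomp Require Import all_boot.
Set Implicit Arguments. Unset Strict Implicit. Unset Printing Implicit Defensive.

Section Model.
Variables (V : Type) (n : nat).

Inductive msg := MWrite0 of V | MWrite1 of V | MRead | MProceed.

Definition mkwrite (b : bool) (v : V) : msg := if b then MWrite1 v else MWrite0 v.

(* Ghost tag: the operation a message is attributed to.
   TWrite k  : the k-th write of p_w (sequence number k);
   TRead i r : the r-th read invoked by p_i. *)
Inductive tag := TWrite of nat | TRead of 'I_n & nat.

Record packet := Pkt { psrc : 'I_n; pdst : 'I_n; pmsg : msg; ptag : tag }.

Inductive opst :=
  | Idle
  | WWait of nat         (* write: waiting at line (3) for sequence number wsn *)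
  | RWait1 of nat        (* read: waiting at line (7) for rsn *)
  | RWait2 of nat.       (* read: waiting at line (9) for sn *)

(* Pending (blocked) message handlers. *)
Inductive task :=
  | PWrite of 'I_n & bool & V      (* WRITE(b,v) from j, waiting at (i) *)
  | PRead of 'I_n & nat & tag.     (* READ() from j, sn read at (i), waiting at (ii) *)

Record lstate := LState {
  hist : nat -> V;
  wsync : 'I_n -> nat;
  rsync : 'I_n -> nat;
  op : opst;
  pend : seq task;
  crashed : bool }.

Record gstate := GState {
  loc : 'I_n -> lstate;
  net : seq packet;        (* messages in transit (unordered: non-FIFO) *)
  sent : seq packet }.     (* ghost log of all messages ever sent *)

Definition upd {A : Type} (f : 'I_n -> A) (i : 'I_n) (x : A) : 'I_n -> A :=
  fun j => if j == i then x else f j.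
Definition updn {A : Type} (f : nat -> A) (k : nat) (x : A) : nat -> A :=
  fun m => if m == k then x else f m.

Definition set_hist l h := LState h (wsync l) (rsync l) (op l) (pend l) (crashed l).
Definition set_wsync l f := LState (hist l) f (rsync l) (op l) (pend l) (crashed l).
Definition set_rsync l f := LState (hist l) (wsync l) f (op l) (pend l) (crashed l).
Definition set_op l o := LState (hist l) (wsync l) (rsync l) o (pend l) (crashed l).
Definition set_pend l p := LState (hist l) (wsync l) (rsync l) (op l) p (crashed l).
Definition set_crashed l c := LState (hist l) (wsync l) (rsync l) (op l) (pend l) c.

Definition set_loc (s : gstate) i l := GState (upd (loc s) i l) (net s) (sent s).
Definition send (s : gstate) (ps : seq packet) :=
  GState (loc s) (net s ++ ps) (sent s ++ ps).

(* Lines (1)-(2) of write(v), executed by p_w. *)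
Definition write_start (w : 'I_n) (l : lstate) (v : V) : lstate * seq packet :=
  let wsn := (wsync l w).+1 in
  let l1 := set_op (set_hist (set_wsync l (upd (wsync l) w wsn)) (updn (hist l) wsn v))
                   (WWait wsn) in
  (l1, [seq Pkt w j (mkwrite (odd wsn) v) (TWrite wsn)
          | j <- enum 'I_n & wsync l1 j == wsn.-1]).

(* Lines (5)-(6) of read(), executed by p_i. *)
Definition read_start (i : 'I_n) (l : lstate) : lstate * seq packet :=
  let rsn := (rsync l i).+1 in
  (set_op (set_rsync l (upd (rsync l) i rsn)) (RWait1 rsn),
   [seq Pkt i j MRead (TRead i rsn) | j <- enum 'I_n & j != i]).

(* Steps (ii)-(v) of the WRITE(b,v) handler at p_i for a message from p_j. *)
Definition write_body (i j : 'I_n) (v : V) (l : lstate) : lstate * seq packet :=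
  let wsn := (wsync l j).+1 in
  if wsn == (wsync l i).+1 then
    let l1 := set_hist (set_wsync l (upd (wsync l) i wsn)) (updn (hist l) wsn v) in
    (set_wsync l1 (upd (wsync l1) j wsn),
     [seq Pkt i m (mkwrite (odd wsn) v) (TWrite wsn)
        | m <- enum 'I_n & wsync l1 m == wsn.-1])
  else if wsn < wsync l i then
    (set_wsync l (upd (wsync l) j wsn),
     [:: Pkt i j (mkwrite (odd wsn.+1) (hist l wsn.+1)) (TWrite wsn.+1)])
  else (set_wsync l (upd (wsync l) j wsn), [::]).

(* Receipt of a message (the non-blocking prefix of each handler). *)
Definition receive (i : 'I_n) (p : packet) (l : lstate) : lstate :=
  match pmsg p with
  | MWrite0 v => set_pend l (rcons (pend l) (PWrite (psrc p) false v))
  | MWrite1 v => set_pend l (rcons (pend l) (PWrite (psrc p) true v))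
  | MRead => set_pend l (rcons (pend l) (PRead (psrc p) (wsync l i) (ptag p)))
  | MProceed => set_rsync l (upd (rsync l) (psrc p) (rsync l (psrc p)).+1)
  end.

Definition init_lstate (v0 : V) : lstate :=
  LState (fun _ => v0) (fun _ => 0) (fun _ => 0) Idle [::] false.
Definition init_state (v0 : V) : gstate := GState (fun _ => init_lstate v0) [::] [::].

(* One atomic step of the system; t = maximal number of crashes, w = writer. *)
Inductive step (t : nat) (w : 'I_n) : gstate -> gstate -> Prop :=
  | StWriteStart s v :
      ~~ crashed (loc s w) -> op (loc s w) = Idle ->
      step t w s (send (set_loc s w (write_start w (loc s w) v).1)
                       (write_start w (loc s w) v).2)
  | StWriteEnd s wsn :
      ~~ crashed (loc s w) -> op (loc s w) = WWait wsn ->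
      n - t <= #|[pred j | wsync (loc s w) j == wsn]| ->
      step t w s (set_loc s w (set_op (loc s w) Idle))
  | StReadStart s i :
      ~~ crashed (loc s i) -> op (loc s i) = Idle ->
      step t w s (send (set_loc s i (read_start i (loc s i)).1)
                       (read_start i (loc s i)).2)
  | StReadMid s i rsn :
      ~~ crashed (loc s i) -> op (loc s i) = RWait1 rsn ->
      n - t <= #|[pred j | rsync (loc s i) j == rsn]| ->
      step t w s (set_loc s i (set_op (loc s i) (RWait2 (wsync (loc s i) i))))
  | StReadEnd s i sn :
      ~~ crashed (loc s i) -> op (loc s i) = RWait2 sn ->
      n - t <= #|[pred j | sn <= wsync (loc s i) j]| ->
      step t w s (set_loc s i (set_op (loc s i) Idle))
  | StDeliver s q1 p q2 :
      net s = q1 ++ p :: q2 -> ~~ crashed (loc s (pdst p)) ->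
      step t w s (GState (upd (loc s) (pdst p) (receive (pdst p) p (loc s (pdst p))))
                         (q1 ++ q2) (sent s))
  | StHandleWrite s i p1 j b v p2 :
      ~~ crashed (loc s i) -> pend (loc s i) = p1 ++ PWrite j b v :: p2 ->
      b = odd (wsync (loc s i) j).+1 ->
      step t w s (send (set_loc s i
                          (write_body i j v (set_pend (loc s i) (p1 ++ p2))).1)
                       (write_body i j v (set_pend (loc s i) (p1 ++ p2))).2)
  | StHandleRead s i p1 j sn tg p2 :
      ~~ crashed (loc s i) -> pend (loc s i) = p1 ++ PRead j sn tg :: p2 ->
      sn <= wsync (loc s i) j ->
      step t w s (send (set_loc s i (set_pend (loc s i) (p1 ++ p2)))
                       [:: Pkt i j MProceed tg])
  | StCrash s i :
      ~~ crashed (loc s i) -> #|[pred j | crashed (loc s j)]| < t ->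
      step t w s (set_loc s i (set_crashed (loc s i) true)).

Inductive reachable (t : nat) (w : 'I_n) (v0 : V) : gstate -> Prop :=
  | ReachInit : reachable t w v0 (init_state v0)
  | ReachStep s s' : reachable t w v0 s -> step t w s s' -> reachable t w v0 s'.

Definition is_read_of (i : 'I_n) (r : nat) (p : packet) : bool :=
  if ptag p is TRead i' r' then (i' == i) && (r' == r) else false.
Definition is_write_of (k : nat) (p : packet) : bool :=
  if ptag p is TWrite k' then k' == k else false.

Definition is_write0 (m : msg) := if m is MWrite0 _ then true else false.
Definition is_write1 (m : msg) := if m is MWrite1 _ then true else false.
Definition is_read (m : msg) := if m is MRead then true else false.
Definition is_proceed (m : msg) := if m is MProceed then true else false.

End Model.

(* Main.v *)
Require Import Defs.
From mathcomp Require Import all_boot.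
From mathcomp Require Import zify.
Require Import Defs.
Set Implicit Arguments. Unset Strict Implicit. Unset Printing Implicit Defensive.

Section Pf.
Variables (V : Type) (n : nat).
Local Notation pk := (packet V n).
Local Notation ls := (lstate V n).
Local Notation gs := (gstate V n).

Definition is_wmsg (m : msg V) := is_write0 m || is_write1 m.
Definition is_tread (tg : tag n) := if tg is TRead _ _ then true else false.
Definition is_twrite (tg : tag n) := if tg is TWrite _ then true else false.
Definition rm (i : 'I_n) (r : nat) (tg : tag n) :=
  if tg is TRead i' r' then (i' == i) && (r' == r) else false.
Definition wm (k : nat) (tg : tag n) := if tg is TWrite k' then k' == k else false.
Definition rdP (P : tag n -> bool) (p : pk) := is_read (pmsg p) && P (ptag p).
Definition prP (P : tag n -> bool) (p : pk) := is_proceed (pmsg p) && P (ptag p).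
Definition wtg k (p : pk) := is_wmsg (pmsg p) && wm k (ptag p).
Definition tpred (P : tag n -> bool) (t : task V n) :=
  if t is PRead _ _ tg then P tg else false.
Definition pcnt P (l : ls) := count (tpred P) (pend l).
Definition PS (s : gs) P := \sum_(m < n) pcnt P (loc s m).
Definition Tok (s : gs) P :=
  count (rdP P) (net s) + PS s P + count (prP P) (sent s) <= count (rdP P) (sent s).
Definition g k (i : 'I_n) (l : ls) :=
  (k <= wsync l i) * n + \sum_(j < n) (k <= (wsync l j).+1).
Definition B (s : gs) k := \sum_(i < n) g k i (loc s i).
Definition Ainv (p : pk) :=
  (is_read (pmsg p) ==> is_tread (ptag p)) && (is_wmsg (pmsg p) ==> is_twrite (ptag p)).
Definition wpk (p : pk) := is_wmsg (pmsg p) && is_twrite (ptag p).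
Definition Inv (s : gs) :=
  [/\ all Ainv (sent s), forall P, Tok s P,
   forall i r, count (rdP (rm i r)) (sent s) <= (r <= rsync (loc s i) i) * n &
   forall k, count (wtg k) (sent s) <= B s k].

Lemma sum_upd (F : 'I_n -> ls -> nat) (L : 'I_n -> ls) x l :
  \sum_(m < n) F m (upd L x l m) + F x (L x) = \sum_(m < n) F m (L m) + F x l.
Proof.
rewrite (bigD1 x) //= [in RHS](bigD1 x) //= /upd eqxx.
rewrite (eq_bigr (fun m => F m (L m))); last by move=> m /negbTE ->.
lia.
Qed.

Lemma bmono k a b : a <= b -> ((k <= a) : nat) <= (k <= b).
Proof. move=> h; case: (leqP k a) => // ka; by rewrite (leq_trans ka h). Qed.

Lemma bmul k a b : a <= b -> ((k <= a) : nat) * n <= (k <= b) * n.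
Proof. by move=> h; rewrite leq_mul2r bmono ?orbT. Qed.

Lemma Gmono k x (l l' : ls) :
  (forall j, wsync l j <= wsync l' j) -> g k x l <= g k x l'.
Proof.
move=> H; rewrite /g leq_add //; first exact: bmul.
by apply: leq_sum => j _; apply: bmono; rewrite ltnS.
Qed.

Lemma g_bump k x (l l' : ls) (c : bool) :
  (forall j, wsync l j <= wsync l' j) ->
  (c -> (k <= wsync l' x) && ~~ (k <= wsync l x)) -> c * n + g k x l <= g k x l'.
Proof.
move=> H; case: c => [/(_ isT) /andP [h1 /negbTE h2]|_]; last by rewrite add0n Gmono.
rewrite /g h1 h2 mul1n mul0n add0n leq_add2l.
by apply: leq_sum => j _; apply: bmono; rewrite ltnS.
Qed.

Lemma g_bump2 k x j (l l' : ls) (c : bool) :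
  (forall j, wsync l j <= wsync l' j) ->
  (c -> (k <= (wsync l' j).+1) && ~~ (k <= (wsync l j).+1)) -> c + g k x l <= g k x l'.
Proof.
move=> H; case: c => [/(_ isT) /andP [h1 /negbTE h2]|_]; last by rewrite add0n Gmono.
rewrite /g (bigD1 j) //= [X in _ <= _ + X](bigD1 j) //= h1 h2.
have h3 : (k <= wsync l x) * n <= (k <= wsync l' x) * n by apply: bmul.
have h4 : \sum_(i < n | i != j) (k <= (wsync l i).+1) <= \sum_(i < n | i != j) (k <= (wsync l' i).+1).
  by apply: leq_sum => i _; apply: bmono; rewrite ltnS.
rewrite add0n /= add1n addnS ltnS; exact: leq_add.
Qed.

Lemma count0 (T : Type) (a b : pred T) s :
  all a s -> (forall p, a p -> ~~ b p) -> count b s = 0.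
Proof.
move=> H H'; elim: s H => //= x s IH /andP [ax as'].
by rewrite IH // (negbTE (H' x ax)).
Qed.

Lemma cnt_map_le (A : Type) (f : A -> pk) (a : pred pk) (s : seq A) (c : bool) :
  (forall x, a (f x) -> c) -> count a (map f s) <= c * size s.
Proof.
move=> H; case: c H => H; first by rewrite mul1n -(size_map f) count_size.
rewrite mul0n leqn0 count_map; apply/eqP; elim: s => //= x s ->.
by case E: (a (f x)) => //; move: (H x E).
Qed.

Lemma size_enum_filter (C : pred 'I_n) : size [seq j <- enum 'I_n | C j] <= n.
Proof. by rewrite size_filter; apply: leq_trans (count_size _ _) _; rewrite size_enum_ord. Qed.

Lemma wpk_facts ps : all wpk ps ->
  [/\ all Ainv ps, forall P, count (rdP P) ps = 0 & forall P, count (prP P) ps = 0].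
Proof.
move=> H; split.
- apply: sub_all H => p; rewrite /wpk /Ainv.
  by case: p => ? ? [] ? [] //= *.
- move=> P; apply: (count0 H) => p; rewrite /wpk /rdP; by case: p => ? ? [] ? //=.
- move=> P; apply: (count0 H) => p; rewrite /wpk /prP; by case: p => ? ? [] ? //=.
Qed.

Lemma wmk b (v : V) : is_wmsg (mkwrite b v). Proof. by case: b. Qed.
Lemma wmkr b (v : V) : is_read (mkwrite b v) = false. Proof. by case: b. Qed.
Lemma wmkp b (v : V) : is_proceed (mkwrite b v) = false. Proof. by case: b. Qed.

Lemma inv_gen (s s' : gs) x (l' : ls) ps :
  Inv s ->
  loc s' = upd (loc s) x l' ->
  sent s' = sent s ++ ps ->
  all Ainv ps ->
  (forall P, count (rdP P) (net s') + pcnt P l' + count (prP P) ps <=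
             count (rdP P) (net s) + pcnt P (loc s x) + count (rdP P) ps) ->
  (forall i r, count (rdP (rm i r)) ps + (r <= rsync (loc s i) i) * n <=
               (r <= rsync (upd (loc s) x l' i) i) * n) ->
  (forall k, count (wtg k) ps + g k x (loc s x) <= g k x l') ->
  Inv s'.
Proof.
move=> [HA HT HD HE] Hl Hs Hps HTk HDk HEk; split.
- by rewrite Hs all_cat HA Hps.
- move=> P; move: (HT P) (HTk P); rewrite /Tok Hs !count_cat /PS Hl.
  have := sum_upd (fun _ l => pcnt P l) (loc s) x l'; lia.
- move=> i r; move: (HD i r) (HDk i r); rewrite Hs count_cat Hl; lia.
- move=> k; move: (HE k) (HEk k); rewrite Hs count_cat /B Hl.
  have := sum_upd (g k) (loc s) x l'; lia.
Qed.

Lemma Dmono (s : gs) x (l' : ls) ps :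
  (forall i r, count (rdP (rm i r)) ps = 0) ->
  (forall j, rsync (loc s x) j <= rsync l' j) ->
  forall i r, count (rdP (rm i r)) ps + (r <= rsync (loc s i) i) * n <=
              (r <= rsync (upd (loc s) x l' i) i) * n.
Proof.
move=> H0 Hm i r; rewrite H0 add0n /upd; case: eqP => [->|_] //.
exact: bmul.
Qed.

Lemma cnt_filt (a : pred pk) (f : 'I_n -> pk) (C : pred 'I_n) (c : bool) :
  (forall x, a (f x) -> c) -> count a [seq f j | j <- enum 'I_n & C j] <= c * n.
Proof.
move=> H; apply: leq_trans (cnt_map_le _ H) _.
by rewrite leq_mul2l size_enum_filter orbT.
Qed.

Lemma add_filt (a : pred pk) (f : 'I_n -> pk) (C : pred 'I_n) (c : bool) G G' :
  (forall x, a (f x) -> c) -> c * n + G <= G' ->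
  count a [seq f j | j <- enum 'I_n & C j] + G <= G'.
Proof. move=> H H'; apply: leq_trans H'; rewrite leq_add2r; exact: cnt_filt. Qed.

Lemma ws_facts w (l : ls) v :
  [/\ all wpk (write_start w l v).2,
      rsync (write_start w l v).1 = rsync l,
      pend (write_start w l v).1 = pend l &
      forall k, count (wtg k) (write_start w l v).2 + g k w l <= g k w (write_start w l v).1].
Proof.
split => //.
- by rewrite /write_start /= all_map; apply/allP => m _; rewrite /= /wpk wmk.
- move=> k; apply: (@add_filt _ _ _ ((wsync l w).+1 == k)).
    by move=> j; rewrite /wtg /= => /andP [].
  apply: g_bump.
    by move=> j; rewrite /= /upd; case: eqP => // ->.
  by move=> /eqP <-; rewrite /= /upd eqxx leqnn ltnn.
Qed.

Lemma wb_facts i j v (l : ls) :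
  [/\ all wpk (write_body i j v l).2,
      rsync (write_body i j v l).1 = rsync l,
      pend (write_body i j v l).1 = pend l &
      forall k, count (wtg k) (write_body i j v l).2 + g k i l <= g k i (write_body i j v l).1].
Proof.
rewrite /write_body /=.
case: ifP => [/eqP e|_].
  have e' : wsync l i = wsync l j by case: e.
  split => //.
    by rewrite all_map; apply/allP => m _; rewrite /= /wpk wmk.
  move=> k; apply: (@add_filt _ _ _ ((wsync l j).+1 == k)).
    by move=> m; rewrite /wtg /= => /andP [].
  apply: g_bump.
    move=> m; rewrite /= /upd; case: eqP => [->|_] //; case: eqP => [->|_] //.
    by rewrite e'.
  move=> /eqP <-; rewrite /= /upd eqxx; case: (i == j); by rewrite e' leqnn ltnn.
case: ifP => [lt|_].
  split => //.
    by rewrite /= /wpk wmk.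
  move=> k; rewrite /= /wtg /= wmk /= addn0; apply: (@g_bump2 _ _ j).
    by move=> m; rewrite /= /upd; case: eqP => [->|_].
  by move=> /eqP <-; rewrite /= /upd eqxx leqnn ltnn.
split => //.
move=> k; rewrite /= add0n; apply: Gmono.
by move=> m; rewrite /= /upd; case: eqP => [->|_].
Qed.

Lemma pcnt_recv P x (p : pk) (l : ls) : pcnt P (receive x p l) <= pcnt P l + rdP P p.
Proof.
rewrite /receive /pcnt /rdP; case: p => src dst [u|u| |] tg /=;
  rewrite -?cats1 ?count_cat /= ?addn0 //.
Qed.

Lemma recv_sync x (p : pk) (l : ls) :
  wsync (receive x p l) = wsync l /\ forall j, rsync l j <= rsync (receive x p l) j.
Proof.
rewrite /receive; case: p => src dst [u|u| |] tg //=; split => // j.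
by rewrite /upd; case: eqP => [->|].
Qed.

Lemma inv_local (s : gs) x (l' : ls) : Inv s -> wsync l' = wsync (loc s x) ->
  rsync l' = rsync (loc s x) -> pend l' = pend (loc s x) -> Inv (set_loc s x l').
Proof.
move=> I Hw Hr Hp; apply: (@inv_gen s _ x l' [::] I) => //.
- by rewrite /= cats0.
- move=> P; rewrite /pcnt Hp /=; lia.
- apply: Dmono => // j; by rewrite Hr.
- move=> k; rewrite add0n; apply: Gmono => j; by rewrite Hw.
Qed.

Lemma rs_facts i (l : ls) :
 [/\ all Ainv (read_start i l).2, forall P, count (prP P) (read_start i l).2 = 0,
     forall k, count (wtg k) (read_start i l).2 = 0,
     wsync (read_start i l).1 = wsync l /\ pend (read_start i l).1 = pend l &
     forall (L : 'I_n -> ls), L i = l -> forall i' r,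
       count (rdP (rm i' r)) (read_start i l).2 + (r <= rsync (L i') i') * n <=
       (r <= rsync (upd L i (read_start i l).1 i') i') * n].
Proof.
split => //.
- by rewrite /read_start /= all_map; apply/allP => m _.
- move=> P; rewrite /read_start /= count_map; apply: (count0 (a := predT)).
    by apply/allP.
  by [].
- move=> k; rewrite /read_start /= count_map; apply: (count0 (a := predT)).
    by apply/allP.
  by [].
move=> L HL i' r; case: (eqVneq i' i) => [->|ne].
  rewrite HL /read_start /=.
  apply: (@add_filt _ _ _ ((rsync l i).+1 == r)).
    by move=> m; rewrite /rdP /= eqxx.
  rewrite /upd /= !eqxx /= !eqxx; case: eqP => [<-|_].
    by rewrite ltnn ltnSn mul0n addn0.
  by rewrite mul0n add0n; apply: bmul.
rewrite /read_start /=.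
apply: (@add_filt _ _ _ false).
  by move=> m; rewrite /rdP /= eq_sym (negbTE ne).
by rewrite /upd (negbTE ne).
Qed.

Lemma step_inv t w (s s' : gs) : Inv s -> step t w s s' -> Inv s'.
Proof.
move=> I st; case: st I.
- move=> {}s v _ _ I.
  case: (write_start w (loc s w) v) (ws_facts w (loc s w) v) => l' ps /= [H1 H2 H3 H4].
  have [A1 A2 A3] := wpk_facts H1.
  apply: (@inv_gen s _ w l' ps I) => //.
  + by move=> P; rewrite /= count_cat A2 A3 /pcnt H3; lia.
  + by apply: Dmono => // j; rewrite H2.
- move=> {}s wsn _ _ _ I; exact: inv_local.
- move=> {}s i _ _ I.
  case: (read_start i (loc s i)) (rs_facts i (loc s i)) => l' ps /= [H1 H2 H3 [H4 H5] H6].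
  apply: (@inv_gen s _ i l' ps I) => //.
  + by move=> P; rewrite /= count_cat H2 /pcnt H5; lia.
  + exact: H6.
  + by move=> k; rewrite H3 add0n; apply: Gmono => j; rewrite H4.
- move=> {}s i rsn _ _ _ I; exact: inv_local.
- move=> {}s i sn _ _ _ I; exact: inv_local.
- move=> {}s q1 p q2 hnet _ I.
  have [Hw Hr] := recv_sync (pdst p) p (loc s (pdst p)).
  apply: (@inv_gen s _ (pdst p) _ [::] I) => //.
  + by rewrite /= cats0.
  + move=> P; have := pcnt_recv P (pdst p) p (loc s (pdst p)).
    rewrite /= hnet !count_cat /=; case: (rdP P p) => /=; lia.
  + by apply: Dmono.
  + by move=> k; rewrite add0n; apply: Gmono => j; rewrite Hw.
- move=> {}s i p1 j b v p2 _ hp _ I.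
  case: (write_body i j v (set_pend (loc s i) (p1 ++ p2)))
        (wb_facts i j v (set_pend (loc s i) (p1 ++ p2))) => l' ps /= [H1 H2 H3 H4].
  have [A1 A2 A3] := wpk_facts H1.
  apply: (@inv_gen s _ i l' ps I) => //.
  + by move=> P; rewrite /= count_cat A2 A3 /pcnt H3 hp !count_cat /=; lia.
  + by apply: Dmono => // j'; rewrite H2.
- move=> {}s i p1 j sn tg p2 _ hp _ I.
  apply: (@inv_gen s _ i (set_pend (loc s i) (p1 ++ p2)) [:: Pkt i j (MProceed V) tg] I) => //.
  + move=> P; rewrite /= count_cat /pcnt hp !count_cat /= /prP /rdP /=.
    case: (P tg) => /=; lia.
  + by apply: Dmono.
- move=> {}s i _ _ I; exact: inv_local.
Qed.

Lemma inv_init (v0 : V) : Inv (@init_state V n v0).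
Proof.
split => //= P; rewrite /Tok /PS /= big1 //.
Qed.

End Pf.

Lemma reach_inv V n t w (v0 : V) (s : gstate V n) : reachable t w v0 s -> Inv s.
Proof. elim => [|s1 s2 _ IH st]; [exact: inv_init | exact: step_inv st]. Qed.

Lemma decomp V n (a : tag n -> bool) (s : seq (packet V n)) :
  count (fun p => a (ptag p)) s = count (rdP a) s + count (prP a) s +
    count (fun p => is_wmsg (pmsg p) && a (ptag p)) s.
Proof.
elim: s => //= p s ->; rewrite /rdP /prP /is_wmsg.
case: p => ? ? [u|u| |] tg /=; case: (a tg) => /=; lia.
Qed.

Lemma B_le V n (s : gstate V n) k : B s k <= 2 * n ^ 2.
Proof.
rewrite /B; apply: leq_trans (_ : \sum_(i < n) (n + n) <= _).
  apply: leq_sum => i _; rewrite /g leq_add //.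
    by apply: leq_trans (leq_mul (leq_b1 _) (leqnn n)) _; rewrite mul1n.
  apply: leq_trans (_ : \sum_(j < n) 1 <= _); first by apply: leq_sum => j _; apply: leq_b1.
  by rewrite sum1_card card_ord.
by rewrite sum_nat_const card_ord; lia.
Qed.

Theorem theorem2 :
  exists C : nat,
  forall (V : Type) (n t : nat) (w : 'I_n) (v0 : V),
    2 * t < n ->
    forall s : gstate V n, reachable t w v0 s ->
      (* only the four message types are ever used *)
      all (fun p => [|| is_write0 (pmsg p), is_write1 (pmsg p),
                        is_read (pmsg p) | is_proceed (pmsg p)]) (sent s) /\
      (* a read operation requires O(n) messages *)
      (forall (i : 'I_n) (r : nat), count (is_read_of i r) (sent s) <= C * n) /\
      (* a write operation requires O(n^2) messages *)
      (forall k : nat, count (is_write_of k) (sent s) <= C * n ^ 2).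
Proof.
exists 2 => V n t w v0 _ s R.
have [HA HT HD HE] := reach_inv R.
split; [|split].
- apply: sub_all (all_predT (sent s)) => p _; by case: p => ? ? [].
- move=> i r.
  have -> : count (is_read_of i r) (sent s) = count (fun p => rm i r (ptag p)) (sent s) by [].
  rewrite decomp.
  have Tk := HT (rm i r); rewrite /Tok in Tk.
  have W0 : count (fun p => is_wmsg (pmsg p) && rm i r (ptag p)) (sent s) = 0.
    by apply: (count0 HA) => p; rewrite /Ainv; case: p => ? ? [u|u| |] [k|i' r'].
  have D := HD i r.
  have Hq : (r <= rsync (loc s i) i) * n <= n by apply: leq_trans (leq_mul (leq_b1 _) (leqnn n)) _; rewrite mul1n.
  have D' := leq_trans D Hq.
  lia.
- move=> k.
  have -> : count (is_write_of k) (sent s) = count (fun p => wm k (ptag p)) (sent s) by [].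
  rewrite decomp.
  have Tk := HT (wm k); rewrite /Tok in Tk.
  have R0 : count (rdP (wm k)) (sent s) = 0.
    by apply: (count0 HA) => p; rewrite /Ainv /rdP; case: p => ? ? [u|u| |] [k'|i' r'].
  have W := leq_trans (HE k) (B_le s k).
  rewrite /wtg in W.
  lia.
Qed.
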